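(* Let $X:\mathbb{N}\to\mathbf{Set}_*$ be a tower of pointed sets. Then the functors $G(X,-),H(X,-):\mathbf{Ab}\to\mathbf{Ab}$ are left exact. If moreover $X$ satisfies the Mittag-Leffler condition, then $G(X,-)$ and $H(X,-)$ are exact.
   Context: $\mathbb{N}$ is regarded as a category with a single morphism $n\to m$ whenever $n\ge m$; $\phi_{n,m}:X(n)\to X(m)$ are the structure maps. For a pointed set $Y$, $Y\wedge A:=\bigoplus_{Y\setminus\{*\}}A$ (finitely supported pointed maps $Y\to A$), functorial in $Y$ via $f_*(sv)=f(s)v$ and in $A$ coordinatewise, where $sv$ is the element with value $v$ at $s$ ($*v=0$). $G(X,A):=\lim_\mathbb{N}(X\wedge A)$; $K(X,A)$ is the image of the injective natural map $\rho:(\lim_\mathbb{N}X)\wedge A\to G(X,A)$, $\rho(xv)(n)=x(n)v$; $H(X,A):=G(X,A)/K(X,A)$. $X$ satisfies the Mittag-Leffler condition if for every $n$ there is $s\ge n$ such that $\mathrm{Im}(X(s)\to X(n))=\mathrm{Im}(X(r)\to X(n))$ for all $r\ge s$. *)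

(* Defs.v *)
From HB Require Import structures.
From mathcomp Require Import all_boot all_order all_algebra.
From mathcomp Require Import boolp classical_sets functions cardinality fsbigop.
Import Order.TTheory GRing.Theory.
Local Open Scope classical_set_scope.
Local Open Scope ring_scope.

(** A tower of pointed sets X : N -> Set_* , given by its carriers, base
    points and the structure maps phi_{n+1,n} (which generate all phi_{n,m}). *)
Record tower := Tower {
  carrier : nat -> Type;
  pt : forall n, carrier n;
  bond : forall n, carrier n.+1 -> carrier n;
  bond_pt : forall n, bond n (pt n.+1) = pt n }.
Arguments carrier t n : clear implicits.
Arguments pt t n : clear implicits.
Arguments bond t n _ : clear implicits.
Arguments bond_pt t n : clear implicits.

Unset Printing Implicit Defensive.

Fixpoint tmap (X : tower) (n k : nat) : carrier X (k + n) -> carrier X n :=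
  match k return carrier X (k + n) -> carrier X n with
  | 0 => fun x => x
  | k'.+1 => fun x => @tmap X n k' (bond X (k' + n) x)
  end.

Definition tim (X : tower) (n k : nat) : set (carrier X n) :=
  [set tmap X n k x | x in [set: carrier X (k + n)]].

(** Mittag-Leffler: for every n there is s = n + j >= n such that for all
    r = n + k >= s, Im(X(r) -> X(n)) = Im(X(s) -> X(n)). *)
Definition mittag_leffler (X : tower) : Prop :=
  forall n, exists j, forall k, (j <= k)%N -> tim X n k = tim X n j.

(** Y /\ A : finitely supported pointed maps Y -> A (value 0 at the base point). *)
Definition wedge (Y : Type) (y0 : Y) (A : zmodType) : set (Y -> A) :=
  [set u | u y0 = 0 /\ finite_set [set y | u y != 0]].

(** functoriality in Y: f_* (s v) = f(s) v, extended additively: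
    (f_* u)(z) = sum_{f(y) = z} u(y) for z <> *, and 0 at the base point. *)
Definition push (Y Z : Type) (z0 : Z) (A : zmodType) (f : Y -> Z) (u : Y -> A)
  : Z -> A :=
  fun z => if `[< z = z0 >] then 0
           else \sum_(y \in [set y : {classic Y} | f y = z]) u y.

Definition seqfun (X : tower) (A : zmodType) := forall n, carrier X n -> A.

(** G(X,A) = lim_N (X /\ A): compatible families. *)
Definition Gset (X : tower) (A : zmodType) : set (seqfun X A) :=
  [set u | (forall n, wedge (carrier X n) (pt X n) A (u n)) /\
           (forall n, push (carrier X n.+1) (carrier X n) (pt X n) A (bond X n) (u n.+1) = u n)].

Definition limT (X : tower) :=
  {x : forall n, carrier X n | forall n, bond X n (x n.+1) = x n}.
Definition limpt (X : tower) : limT X :=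
  exist (fun x : forall n, carrier X n => forall n, bond X n (x n.+1) = x n)
    (fun n => pt X n) (bond_pt X).

(** rho : (lim X) /\ A -> G(X,A), rho(x v)(n) = x(n) v (extended additively),
    i.e. rho(w)(n) = (pi_n)_* w. *)
Definition rho (X : tower) (A : zmodType) (w : limT X -> A) : seqfun X A :=
  fun n => push (limT X) (carrier X n) (pt X n) A (fun x : limT X => proj1_sig x n) w.

(** K(X,A) = image of rho. H(X,A) = G(X,A)/K(X,A). *)
Definition Kset (X : tower) (A : zmodType) : set (seqfun X A) :=
  [set rho X A w | w in wedge (limT X) (limpt X) A].

Definition Gmap (X : tower) (A B : zmodType) (f : A -> B) (u : seqfun X A)
  : seqfun X B := fun n t => f (u n t).
Arguments Gmap {X A B} f u.

Definition sfzero (X : tower) (A : zmodType) : seqfun X A := fun _ _ => 0.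
Definition sfsub (X : tower) (A : zmodType) (u v : seqfun X A) : seqfun X A :=
  fun n t => u n t - v n t.
Arguments sfsub {X A} u v.

Definition left_exact_seq (A B C : zmodType) (f : A -> B) (g : B -> C) : Prop :=
  injective f /\ (forall b, g b = 0 <-> exists a, f a = b).
Definition short_exact_seq (A B C : zmodType) (f : A -> B) (g : B -> C) : Prop :=
  left_exact_seq A B C f g /\ (forall c, exists b, g b = c).
Arguments left_exact_seq {A B C} f g.
Arguments short_exact_seq {A B C} f g.

(** G(X,-) is well defined on f (G(X,f) maps G(X,A) into G(X,B), and
    K(X,A) into K(X,B), so H(X,f) = G(X,f) mod K is well defined). *)
Definition G_welldef (X : tower) (A B : zmodType) (f : A -> B) : Prop :=
  (forall u, Gset X A u -> Gset X B (Gmap f u)) /\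
  (forall u, Kset X A u -> Kset X B (Gmap f u)).
Arguments G_welldef X {A B} f.

Definition G_left_exact (X : tower) (A B C : zmodType) (f : A -> B) (g : B -> C)
  : Prop :=
  (forall u, Gset X A u -> Gmap f u = sfzero X B -> u = sfzero X A) /\
  (forall u, Gset X A u -> Gmap g (Gmap f u) = sfzero X C) /\
  (forall v, Gset X B v -> Gmap g v = sfzero X C ->
     exists u, Gset X A u /\ Gmap f u = v).
Arguments G_left_exact X {A B C} f g.

Definition G_surj (X : tower) (B C : zmodType) (g : B -> C) : Prop :=
  forall w, Gset X C w -> exists v, Gset X B v /\ Gmap g v = w.
Arguments G_surj X {B C} g.

(** 0 -> H(X,A) -> H(X,B) -> H(X,C) exact, with H = G/K written out:
    the class [u] of u in G(X,A) is zero iff u lies in K(X,A). *)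
Definition H_left_exact (X : tower) (A B C : zmodType) (f : A -> B) (g : B -> C)
  : Prop :=
  (forall u, Gset X A u -> Kset X B (Gmap f u) -> Kset X A u) /\
  (forall u, Gset X A u -> Kset X C (Gmap g (Gmap f u))) /\
  (forall v, Gset X B v -> Kset X C (Gmap g v) ->
     exists u, Gset X A u /\ Kset X B (sfsub v (Gmap f u))).
Arguments H_left_exact X {A B C} f g.

Definition H_surj (X : tower) (B C : zmodType) (g : B -> C) : Prop :=
  forall w, Gset X C w -> exists v, Gset X B v /\ Kset X C (sfsub w (Gmap g v)).
Arguments H_surj X {B C} g.

(* Main.v *)
Require Import Defs.
From HB Require Import structures.
From mathcomp Require Import all_boot all_order all_algebra.
From mathcomp Require Import boolp classical_sets functions cardinality fsbigop.

Module Helpers.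
Import GRing.Theory.
Local Open Scope classical_set_scope.
Local Open Scope ring_scope.
Set Implicit Arguments.
Unset Strict Implicit.

Section PushLemmas.
Variable A : zmodType.

Lemma sum_seq (T : Type) (P : set T) (u : T -> A) (r : seq {classic T}) :
  uniq r -> (forall y, u y != 0 -> y \in r) ->
  \sum_(y \in (P : set {classic T})) u y = \sum_(y <- r | `[< P y >]) u y.
Proof.
move=> ur hr.
rewrite (@fsbigE _ _ _ {classic T} P (filter (fun y : {classic T} => `[< P y >]) r)).
- rewrite big_filter_cond; apply: eq_bigl => y.
  by case: asboolP => h; rewrite ?andbF /= ?andbT /= //; apply: mem_set.
- exact: filter_uniq.
- by move=> y /=; rewrite mem_filter => /andP[/asboolP].
- move=> y Py; rewrite mem_filter; apply: contraNeq => uy.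
  by rewrite hr // andbT; apply/asboolP.
Qed.

Lemma fin_seq (T : Type) (S : set T) : finite_set S ->
  exists r : seq {classic T}, uniq r /\ forall y, S y <-> y \in r.
Proof.
move=> fS; exists (finmap.enum_fset (fset_set (S : set {classic T}))); split; first exact: finmap.fset_uniq.
by move=> y; rewrite (@in_fset_set {classic T} S fS) in_setE.
Qed.

Definition supp {T : Type} (u : T -> A) : set T := [set y | u y != 0].

Lemma push_seq (Y Z : Type) (z0 : Z) (f : Y -> Z) (u : Y -> A) (r : seq {classic Y}) z :
  uniq r -> (forall y, u y != 0 -> y \in r) -> z <> z0 ->
  push Y Z z0 A f u z = \sum_(y <- r | `[< f y = z >]) u y.
Proof.
move=> ur hr nz; rewrite /push; case: asboolP => // _.
exact: sum_seq.
Qed.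

Lemma push_pt (Y Z : Type) (z0 : Z) (f : Y -> Z) (u : Y -> A) :
  push Y Z z0 A f u z0 = 0.
Proof. by rewrite /push; case: asboolP. Qed.

Lemma push_nz (Y Z : Type) (z0 : Z) (f : Y -> Z) (u : Y -> A) z :
  push Y Z z0 A f u z != 0 -> z <> z0 /\ exists y, f y = z /\ u y != 0.
Proof.
rewrite /push; case: asboolP => [_|nz h]; first by rewrite eqxx.
split => //.
apply: contra_notP (negP h) => hn; apply/eqP; apply: fsbig1 => y /= fy.
apply/eqP; apply: contra_notT hn => uy; by exists y.
Qed.

Lemma push_fin (Y Z : Type) (z0 : Z) (f : Y -> Z) (u : Y -> A) :
  finite_set (supp u) -> finite_set (supp (push Y Z z0 A f u)).
Proof.
move=> fu; apply: (sub_finite_set _ (finite_image f fu)) => z hz; have [_ [y [fy uy]]] := push_nz hz.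
by exists y.
Qed.

Lemma push_add (Y Z : Type) (z0 : Z) (f : Y -> Z) (u v : Y -> A) :
  finite_set (supp u) -> finite_set (supp v) ->
  push Y Z z0 A f (fun y => u y + v y) =
  fun z => push Y Z z0 A f u z + push Y Z z0 A f v z.
Proof.
move=> fu fv; have fuv : finite_set (supp u `|` supp v) by rewrite finite_setU.
have [r [ur hr]] := fin_seq fuv.
have hu y : u y != 0 -> y \in r by move=> h; apply/hr; left.
have hv y : v y != 0 -> y \in r by move=> h; apply/hr; right.
apply: funext => z; have [->|nz] := pselect (z = z0); first by rewrite !push_pt addr0.
rewrite (push_seq f ur) //; last first.
  move=> y; apply: contraTT => yr.
  have -> : u y = 0 by apply/eqP; apply: contraNT yr; apply: hu.
  have -> : v y = 0 by apply/eqP; apply: contraNT yr; apply: hv.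
  by rewrite addr0 ?negbK eqxx.
by rewrite (push_seq f ur hu nz) (push_seq f ur hv nz) -big_split /=.
Qed.

Lemma asbool_eqE (T : eqType) (a b : T) : `[< a = b >] = (a == b).
Proof. by apply/idP/idP => [/asboolP ->|/eqP ->]; [exact: eqxx|exact/asboolP]. Qed.

Lemma sum_pick (T : eqType) (r : seq T) (u : T -> A) a :
  uniq r -> (u a != 0 -> a \in r) ->
  \sum_(x <- r) (if x == a then u x else 0) = u a.
Proof.
move=> ur ha; have [ar|nar] := boolP (a \in r).
  rewrite (bigD1_seq a) //= eqxx big1 ?addr0 // => i /negPf -> //.
have -> : u a = 0 by apply/eqP; apply: contraNT nar.
rewrite big1_seq // => i /andP[_ ir]; case: eqP => // eia; subst i; by rewrite ir in nar.
Qed.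

Lemma push_zero (Y Z : Type) (z0 : Z) (f : Y -> Z) :
  push Y Z z0 A f (fun _ => 0) = fun _ => 0.
Proof.
apply: funext => z; rewrite /push; case: asboolP => // _; exact: fsbig1.
Qed.

Lemma push_id (Y : Type) (y0 : Y) (f : Y -> Y) (u : Y -> A) :
  finite_set (supp u) -> u y0 = 0 -> (forall y, u y != 0 -> f y = y) ->
  push Y Y y0 A f u = u.
Proof.
move=> fu u0 hf; have [r [ur hr]] := fin_seq fu.
apply: funext => y; have [->|ny] := pselect (y = y0); first by rewrite push_pt u0.
rewrite (push_seq f ur (fun y h => (hr y).1 h) ny) big_mkcond /=.
rewrite -(@sum_pick {classic Y} r u y ur); last by move=> h; apply/hr.
apply: eq_bigr => x _; have [ux0|uxn] := eqVneq (u x) 0.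
  by rewrite ux0; case: ifP; case: ifP.
rewrite (hf _ uxn); case: asboolP => [->|nxy]; [by rewrite eqxx | by case: eqP].
Qed.

Lemma push_comp (Y Z W : Type) (z0 : Z) (w0 : W) (f : Y -> Z) (h : Z -> W) (u : Y -> A) :
  finite_set (supp u) -> h z0 = w0 ->
  push Z W w0 A h (push Y Z z0 A f u) = push Y W w0 A (fun y => h (f y)) u.
Proof.
move=> fu hz0; have [r [ur hr]] := fin_seq fu.
have hr' : forall y, u y != 0 -> y \in r by move=> y hy; apply/hr.
pose s : seq {classic Z} := @undup {classic Z} (map (f : {classic Y} -> {classic Z}) r).
have us : uniq s by exact: undup_uniq.
have hs : forall z, push Y Z z0 A f u z != 0 -> z \in s.
  move=> z hz; have [_ [y [fy uy]]] := push_nz hz; rewrite /s (@mem_undup {classic Z}) -fy; apply/mapP; exists y => //.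
  exact: hr'.
apply: funext => w; have [->|nw] := pselect (w = w0); first by rewrite !push_pt.
rewrite (push_seq h us hs nw) (push_seq _ ur hr' nw).
rewrite (eq_bigr (fun z => \sum_(y <- r) (if `[< f y = z >] then u y else 0))); last first.
  move=> z hz; rewrite (push_seq f ur hr') ?big_mkcond //.
  by move=> ez; move/asboolP: hz; rewrite ez hz0 => /esym.
rewrite big_mkcond /=.
rewrite (eq_bigr (fun z => \sum_(y <- r) (if `[< h z = w >] then (if `[< f y = z >] then u y else 0) else 0))); last first.
  by move=> z _; case: ifP => // _; rewrite big1.
rewrite exchange_big /= [RHS]big_mkcond /=.
apply: eq_bigr => y _.
rewrite (eq_bigr (fun z : {classic Z} => if z == (f y : {classic Z}) then (if `[< h (f y) = w >] then u y else 0) else 0)); last first.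
  move=> z _; case: eqP => [->|nzf].
    by case: asboolP => // _; case: asboolP.
  by case: asboolP => _ //; case: asboolP => // e; case: nzf.
rewrite (sum_pick (u := fun _ => if `[< h (f y) = w >] then u y else 0)) //.
move=> hn; rewrite /s (@mem_undup {classic Z}); apply/mapP; exists y => //; apply: hr'.
by apply: contraNneq hn => ->; case: ifP.
Qed.

End PushLemmas.


Lemma push_morph (A B : zmodType) (h : {additive A -> B}) (Y Z : Type) (z0 : Z)
  (f : Y -> Z) (u : Y -> A) : finite_set (supp u) ->
  push Y Z z0 B f (fun y => h (u y)) = fun z => h (push Y Z z0 A f u z).
Proof.
move=> fu; have [r [ur hr]] := fin_seq fu.
have hr' : forall y, u y != 0 -> y \in r by move=> y hy; apply/hr.
apply: funext => z; have [->|nz] := pselect (z = z0); first by rewrite !push_pt raddf0.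
rewrite (push_seq f ur hr' nz) (push_seq f ur) // ?raddf_sum //.
by move=> y hy; apply: hr'; apply: contraNneq hy => ->; rewrite raddf0.
Qed.

Lemma supp_morph (A B : zmodType) (h : {additive A -> B}) (T : Type) (u : T -> A) :
  finite_set (supp u) -> finite_set (supp (fun y => h (u y))).
Proof.
apply: sub_finite_set => y /= hy; apply: contraNneq hy => ->; by rewrite raddf0.
Qed.

Lemma wedge_morph (A B : zmodType) (h : {additive A -> B}) (T : Type) (t0 : T) (u : T -> A) :
  wedge T t0 A u -> wedge T t0 B (fun y => h (u y)).
Proof. by move=> [u0 fu]; split; [rewrite u0 raddf0 | exact: (supp_morph h fu)]. Qed.

Section Tow.
Variable X : tower.

Lemma Gmap_G (A B : zmodType) (h : {additive A -> B}) (u : seqfun X A) :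
  Gset X A u -> Gset X B (Gmap h u).
Proof.
move=> [hw hc]; split => n; first exact: wedge_morph.
by rewrite /Gmap (push_morph h _ _ (hw n.+1).2) hc.
Qed.

Lemma Gmap_rho (A B : zmodType) (h : {additive A -> B}) (w : limT X -> A) :
  finite_set (supp w) -> Gmap h (rho X A w) = rho X B (fun x => h (w x)).
Proof.
move=> fw; apply: functional_extensionality_dep => n; rewrite /Gmap /rho.
by rewrite (push_morph h).
Qed.

Lemma rho_G (A : zmodType) (w : limT X -> A) :
  wedge (limT X) (limpt X) A w -> Gset X A (rho X A w).
Proof.
move=> [w0 fw]; split => n.
  by split; [exact: push_pt | exact: (push_fin _ _ fw)].
rewrite /rho (push_comp _ fw (bond_pt X n)).
congr push; apply: funext => x; exact: (proj2_sig x n).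
Qed.

Lemma push_opp (A : zmodType) (Y Z : Type) (z0 : Z) (f : Y -> Z) (u : Y -> A) :
  finite_set (supp u) ->
  push Y Z z0 A f (fun y => - u y) = fun z => - push Y Z z0 A f u z.
Proof. exact: (push_morph (-%R : {additive A -> A})). Qed.

Lemma Gset_sub (A : zmodType) (u v : seqfun X A) :
  Gset X A u -> Gset X A v -> Gset X A (sfsub u v).
Proof.
move=> [hu cu] [hv cv]; split => n.
  split; first by rewrite /sfsub (hu n).1 (hv n).1 subr0.
  have : finite_set (supp (u n) `|` supp (v n)) by rewrite finite_setU; split; [exact: (hu n).2|exact: (hv n).2].
  apply: sub_finite_set => t /=; rewrite /sfsub /supp /=.
  move=> h; have [e1|n1] := eqVneq (u n t) 0; last by left.
  have [e2|n2] := eqVneq (v n t) 0; last by right.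
  by rewrite e1 e2 subr0 eqxx in h.
rewrite /sfsub (push_add _ _ (hu n.+1).2); last exact: (supp_morph (-%R : {additive A -> A}) (hv n.+1).2).
rewrite (push_opp _ _ (hv n.+1).2) cu cv; exact: funext.
Qed.

Lemma proj_down (x y : limT X) n k :
  proj1_sig x (k + n)%N = proj1_sig y (k + n)%N -> proj1_sig x n = proj1_sig y n.
Proof.
elim: k => [|k IH] // e; apply: IH.
rewrite -(proj2_sig x (k + n)%N) -(proj2_sig y (k + n)%N) /=.
exact: (congr1 (bond X (k + n)) e).
Qed.

Lemma proj_up (x y : limT X) n m : (n <= m)%N ->
  proj1_sig x n <> proj1_sig y n -> proj1_sig x m <> proj1_sig y m.
Proof.
move=> nm ne e; apply: ne; apply: (@proj_down _ _ _ (m - n)%N); by rewrite subnK.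
Qed.

Lemma lim_sep (x y : limT X) : x <> y -> exists n, proj1_sig x n <> proj1_sig y n.
Proof.
move=> nxy; apply: contra_notP nxy => nh.
move: x y nh => [x hx] [y hy] /= nh.
have e : x = y.
  apply: functional_extensionality_dep => n.
  case: (pselect (x n = y n)) => // ne; exfalso; apply: nh; by exists n.
subst y; congr exist; exact: Prop_irrelevance.
Qed.

Lemma rho_at (A : zmodType) (w : limT X -> A) : wedge (limT X) (limpt X) A w ->
  forall x, w x != 0 -> exists n, rho X A w n (proj1_sig x n) = w x.
Proof.
move=> [w0 fw] x wx.
have [r [ur hr]] := fin_seq fw.
have hr' : forall y, w y != 0 -> y \in r by move=> y hy; apply/hr.
have [n0 hn0] : exists n0, proj1_sig x n0 <> pt X n0.
  apply: (lim_sep (y := limpt X)) => e; by rewrite e w0 eqxx in wx.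
have [N [hN hl]] : exists N, (n0 <= N)%N /\
    forall x', x' \in r -> x' <> x -> proj1_sig x' N <> proj1_sig x N.
  elim: (r : seq {classic (limT X)}) => [|a l [N [hN hl]]].
    by exists n0; split.
  case: (pselect (a = x)) => [ax|ax].
    exists N; split => // x'; rewrite in_cons => /orP[/eqP -> //|]; exact: hl.
  have [m hm] := lim_sep ax.
  exists (maxn N m); split; first by rewrite (leq_trans hN) // leq_maxl.
  move=> x'; rewrite in_cons => /orP[/eqP -> _|xl nx].
    by apply: (proj_up _ hm); rewrite leq_maxr.
  by apply: (proj_up _ (hl _ xl nx)); rewrite leq_maxl.
exists N; rewrite /rho (push_seq _ ur hr'); last first.
  exact: (@proj_up x (limpt X) n0 N hN hn0).
rewrite big_mkcond /= -(@sum_pick _ _ r w x ur) //.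
apply: eq_big_seq => x' x'r.
case: (pselect (x' = x)) => [->|nx].
  by rewrite eqxx; case: asboolP.
have -> : (x' == x :> {classic (limT X)}) = false by apply/eqP.
by case: asboolP => // e; exfalso; apply: (hl _ x'r nx).
by move=> _; apply: hr'.
Qed.

End Tow.


Definition pre (B C : zmodType) (g : B -> C) (c : C) : B :=
  match pselect (exists b, g b = c) with
  | left h => proj1_sig (cid h)
  | right _ => 0 end.

Lemma preP (B C : zmodType) (g : B -> C) c : (exists b, g b = c) -> g (pre g c) = c.
Proof. rewrite /pre; case: pselect => // h _; exact: (proj2_sig (cid h)). Qed.

Lemma lift_wedge (B C : zmodType) (g : {additive B -> C}) (T : Type) (t0 : T) (w : T -> C) :
  wedge T t0 C w -> (forall x, exists b, g b = w x) ->
  exists w', wedge T t0 B w' /\ forall x, g (w' x) = w x.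
Proof.
move=> [w0 fw] H; exists (fun x => if w x == 0 then 0 else pre g (w x)); split.
  split; first by rewrite w0 eqxx.
  apply: sub_finite_set fw => x /=; by case: (w x == 0); rewrite ?eqxx.
move=> x; case: eqP => [->|_]; first by rewrite raddf0.
exact: preP.
Qed.

Lemma finite_supp0 (A : zmodType) (T : Type) : finite_set (supp (fun _ : T => (0 : A))).
Proof.
apply: (sub_finite_set (B := set0)); last exact: finite_set0.
by move=> x; rewrite /supp /= eqxx.
Qed.

Lemma rho0 (X : tower) (A : zmodType) : Kset X A (sfzero X A).
Proof.
exists (fun _ => 0); first by split => //; exact: finite_supp0.
apply: functional_extensionality_dep => n; rewrite /rho push_zero //.
Qed.

Section Part1.
Variable X : tower.

Lemma G_welldef_all (A B : zmodType) (h : {additive A -> B}) : G_welldef X h.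
Proof.
split; first exact: Gmap_G.
move=> u [w hw <-]; exists (fun x => h (w x)); first exact: wedge_morph.
by rewrite Gmap_rho //; case: hw.
Qed.

Lemma Gset_inj (A B : zmodType) (f : {additive A -> B}) (u : seqfun X A) :
  injective f -> Gset X B (Gmap f u) -> Gset X A u.
Proof.
move=> fi [hw hc].
have fu : forall n, finite_set (supp (u n)).
  move=> n; apply: sub_finite_set (hw n).2 => t /=; rewrite /Gmap.
  by apply: contraNneq => /eqP; rewrite -(raddf0 f) => /eqP/fi ->.
split => n.
  split; last exact: fu.
  by apply: fi; rewrite raddf0 -(hw n).1.
apply: funext => z; apply: fi.
have := congr1 (fun F => F z) (hc n); rewrite /Gmap (push_morph f _ _ (fu n.+1)) //.
Qed.

Lemma part1 (A B C : zmodType) (f : {additive A -> B}) (g : {additive B -> C}) :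
  left_exact_seq f g ->
  [/\ G_welldef X f, G_welldef X g, G_left_exact X f g & H_left_exact X f g].
Proof.
move=> [fi hex].
have gf : forall a, g (f a) = 0 by move=> a; apply/(hex _).2; exists a.
have G3 : forall v, Gset X B v -> Gmap g v = sfzero X C ->
     exists u, Gset X A u /\ Gmap f u = v.
  move=> v hv hgv; exists (fun n t => pre f (v n t)).
  have e : Gmap f (fun n t => pre f (v n t)) = v.
    apply: functional_extensionality_dep => n; apply: funext => t; rewrite /Gmap preP //.
    apply/hex; exact: (congr1 (fun F => F n t) hgv).
  by split => //; apply: (Gset_inj fi); rewrite e.
have GL : G_left_exact X f g.
  split; last split => //.
    move=> u _ e; apply: functional_extensionality_dep => n; apply: funext => t.
    apply: fi; rewrite raddf0; exact: (congr1 (fun F => F n t) e).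
  move=> u _; apply: functional_extensionality_dep => n; apply: funext => t.
  exact: gf.
split => //; try exact: G_welldef_all.
split.
- move=> u hu [w hw ew].
  have hw' : forall x, exists a, f a = w x.
    move=> x; have [->|wx] := eqVneq (w x) 0; first by exists 0; rewrite raddf0.
    have [n hn] := rho_at hw wx; exists (u n (proj1_sig x n)).
    by rewrite -hn ew.
  have [w' [ww' fw']] := lift_wedge hw hw'.
  exists w' => //.
  have ew' : (fun x => f (w' x)) = w by apply: funext.
  apply: functional_extensionality_dep => n; apply: funext => t; apply: fi.
  have h1 := congr1 (fun F => F n t) (Gmap_rho f ww'.2).
  rewrite /= ew' ew /Gmap in h1; by rewrite h1.
- split.
    move=> u hu; rewrite (GL.2.1 u hu); exact: rho0.
  move=> v hv [w hw ew].
  have hw' : forall x, exists b, g b = w x.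
    move=> x; have [->|wx] := eqVneq (w x) 0; first by exists 0; rewrite raddf0.
    have [n hn] := rho_at hw wx; exists (v n (proj1_sig x n)).
    by rewrite -hn ew.
  have [w' [ww' gw']] := lift_wedge hw hw'.
  have ew' : (fun x => g (w' x)) = w by apply: funext.
  have hv' := Gset_sub hv (rho_G ww').
  have [u [hu eu]] : exists u, Gset X A u /\ Gmap f u = sfsub v (rho X B w').
    apply: G3 => //; apply: functional_extensionality_dep => n; apply: funext => t.
    rewrite /Gmap /sfsub raddfB.
    have h1 := congr1 (fun F => F n t) (Gmap_rho g ww'.2).
    rewrite /= ew' ew /Gmap in h1; by rewrite h1 subrr.
  exists u; split => //; exists w' => //.
  rewrite eu; apply: functional_extensionality_dep => n; apply: funext => t.
  by rewrite /sfsub subKr.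
Qed.

End Part1.


Section ML.
Variable X : tower.

Fixpoint reach (k : nat) : forall n, set (carrier X n) :=
  match k with
  | 0 => fun n => setT
  | k'.+1 => fun n => bond X n @` @reach k' n.+1
  end.

Arguments reach : clear implicits.
Definition castc m p (e : m = p) (x : carrier X m) : carrier X p :=
  eq_rect m (carrier X) x p e.

Lemma castK' m p (e : m = p) x : castc e (castc (esym e) x) = x.
Proof. by subst p. Qed.

Lemma bond_cast m p (e : m.+1 = p.+1) x :
  bond X p (castc e x) = castc (eq_add_S _ _ e) (bond X m x).
Proof.
have e' := eq_add_S _ _ e; subst p.
by rewrite (eq_irrelevance e erefl) (eq_irrelevance (eq_add_S _ _ _) erefl).
Qed.

Lemma tmapS k : forall n (e : (k + n.+1 = k.+1 + n)%N) (x : carrier X (k + n.+1)),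
  tmap X n k.+1 (castc e x) = bond X n (tmap X n.+1 k x).
Proof.
elim: k => [|k IH] n e x.
  by rewrite (eq_irrelevance e erefl).
rewrite [LHS]/= (@bond_cast (k + n.+1) (k.+1 + n) e).
exact: IH.
Qed.

Lemma reach_tim k : forall n z, reach k n z <-> exists x : carrier X (k + n), tmap X n k x = z.
Proof.
elim: k => [|k IH] n z /=.
  by split => // _; exists z.
split.
  move=> [y /IH [x' hx'] <-].
  exists (castc (addnS k n) x'); rewrite -hx'; exact: tmapS.
move=> [x hx]; exists (tmap X n.+1 k (castc (esym (addnS k n)) x)).
  by apply/IH; eexists.
rewrite -hx -(tmapS (addnS k n)) castK' //.
Qed.

Lemma reach_eq k n : reach k n = tim X n k.
Proof.
apply/seteqP; split => z.
  by move/reach_tim => [x hx]; exists x.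
by move=> [x _ hx]; apply/reach_tim; exists x.
Qed.

Lemma reach_mono k : forall n, reach k.+1 n `<=` reach k n.
Proof.
elim: k => [|k IH] n z //= [y hy <-]; exists y => //; exact: IH.
Qed.

Lemma reach_le k k' n : (k <= k')%N -> reach k' n `<=` reach k n.
Proof.
move=> /subnK <-; elim: (k' - k)%N => [|d IH] //= z hz.
apply: IH; exact: reach_mono.
Qed.

Definition stable n (z : carrier X n) := forall k, reach k n z.
Arguments stable : clear implicits.

Lemma stable_bond n y : stable n.+1 y -> stable n (bond X n y).
Proof. move=> h k; apply: reach_mono; by exists y. Qed.

Lemma stable_lift n z : mittag_leffler X -> stable n z ->
  exists y, stable n.+1 y /\ bond X n y = z.
Proof.
move=> ml hz; have [j hj] := ml n.+1.
have [y hy e] := hz j.+1; exists y; split => // k.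
have [kj|jk] := leqP k j; first exact: (reach_le kj).
by rewrite reach_eq hj ?(ltnW jk) // -reach_eq.
Qed.

Lemma G_stable (C : zmodType) (w : seqfun X C) : Gset X C w ->
  forall n z, w n z != 0 -> stable n z.
Proof.
move=> [hw hc] n z wz k; elim: k n z wz => [|k IH] n z wz //=.
rewrite -(hc n) in wz; have [_ [y [fy wy]]] := push_nz wz.
by exists y => //; apply: IH.
Qed.

Lemma lift_wedge2 (B C : zmodType) (g : {additive B -> C}) (T : Type) (t0 : T) (w : T -> C) :
  wedge T t0 C w -> (forall x, exists b, g b = w x) ->
  exists w', [/\ wedge T t0 B w', forall x, g (w' x) = w x & forall x, w' x != 0 -> w x != 0].
Proof.
move=> [w0 fw] H; exists (fun x => if w x == 0 then 0 else pre g (w x)); split.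
- split; first by rewrite w0 eqxx.
  apply: sub_finite_set fw => x /=; by case: (w x == 0); rewrite ?eqxx.
- move=> x; case: eqP => [->|_]; first by rewrite raddf0.
  exact: preP.
- by move=> x; case: (w x == 0); rewrite ?eqxx.
Qed.

Lemma finite_supp_sub (A : zmodType) (T : Type) (u v : T -> A) :
  finite_set (supp u) -> finite_set (supp v) ->
  finite_set (supp (fun t => u t - v t)) /\ finite_set (supp (fun t => u t + v t)).
Proof.
move=> fu fv; have : finite_set (supp u `|` supp v) by rewrite finite_setU.
move=> fuv; split; apply: sub_finite_set fuv => t /=; rewrite /supp /=;
  move=> h; have [e1|n1] := eqVneq (u t) 0; try by left.
- have [e2|n2] := eqVneq (v t) 0; last by right.
  by rewrite e1 e2 subr0 eqxx in h.
- have [e2|n2] := eqVneq (v t) 0; last by right.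
  by rewrite e1 e2 addr0 eqxx in h.
Qed.

Lemma G_surj_ML (B C : zmodType) (g : {additive B -> C}) :
  mittag_leffler X -> (forall c, exists b, g b = c) -> G_surj X g.
Proof.
move=> ml gs w hwG; have [hw hc] := hwG.
pose Q n (v : carrier X n -> B) := [/\ v (pt X n) = 0, finite_set (supp v),
   (forall z, v z != 0 -> stable n z) & forall z, g (v z) = w n z].
have lift : forall n, exists v, Q n v.
  move=> n; have [v [[v0 fv] gv sv]] := lift_wedge2 (hw n) (fun z => gs (w n z)).
  exists v; split => // z vz; apply: (G_stable hwG); exact: sv.
have step : forall n v, Q n v -> exists v1, Q n.+1 v1 /\
    push (carrier X n.+1) (carrier X n) (pt X n) B (bond X n) v1 = v.
  move=> n v [v0 fv sv gv].
  have [v' [v'0 fv' sv' gv']] := lift n.+1.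
  pose d := fun z => v z - push _ _ (pt X n) B (bond X n) v' z.
  have fpush := push_fin (pt X n) (bond X n) fv'.
  have fd : finite_set (supp d) := (finite_supp_sub fv fpush).1.
  have d0 : d (pt X n) = 0 by rewrite /d v0 push_pt subr0.
  have sd : forall z, d z != 0 -> stable n z.
    move=> z dz; have [vz|vz] := eqVneq (v z) 0; last exact: sv.
    rewrite /d vz sub0r oppr_eq0 in dz.
    have [_ [y [fy wy]]] := push_nz dz; rewrite -fy; apply: stable_bond; exact: sv'.
  have gd : forall z, g (d z) = 0.
    move=> z; rewrite /d raddfB gv.
    have h1 := congr1 (fun F => F z) (push_morph g (pt X n) (bond X n) fv').
    rewrite /= in h1; rewrite -h1.
    have -> : (fun y => g (v' y)) = w n.+1 by apply: funext.
    by rewrite hc subrr.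
  pose sec := fun z => match pselect (stable n z) with
    | left h => proj1_sig (cid (stable_lift ml h))
    | right _ => pt X n.+1 end.
  have secP : forall z, stable n z -> stable n.+1 (sec z) /\ bond X n (sec z) = z.
    move=> z hz; rewrite /sec; case: pselect => // h.
    exact: (proj2_sig (cid (stable_lift ml h))).
  pose corr := push _ _ (pt X n.+1) B sec d.
  have fcorr := push_fin (pt X n.+1) sec fd.
  exists (fun y => v' y + corr y); split.
    split.
    - by rewrite v'0 /corr push_pt addr0.
    - exact: (finite_supp_sub fv' fcorr).2.
    - move=> y hy; have [vy|vy] := eqVneq (v' y) 0; last exact: sv'.
      rewrite vy add0r in hy; have [_ [z [sz dz]]] := push_nz hy.
      by rewrite -sz; apply: (secP _ (sd _ dz)).1.
    - move=> y; rewrite raddfD gv'.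
      have h1 := congr1 (fun F => F y) (push_morph g (pt X n.+1) sec fd).
      rewrite /= in h1; rewrite /corr -h1.
      have -> : (fun z => g (d z)) = fun _ => 0 by apply: funext.
      by rewrite push_zero addr0.
  rewrite push_add // /corr (push_comp _ fd (bond_pt X n)).
  rewrite push_id //; last by move=> z dz; exact: (secP _ (sd _ dz)).2.
  by apply: funext => z; rewrite /d addrC subrK.
have [v0 Q0] := cid (lift 0%N).
pose stepf n (v : {v | Q n v}) := cid (step n _ (proj2_sig v)).
pose V := fix V n : {v | Q n v} := match n return {v | Q n v} with
  | 0 => exist _ v0 Q0
  | n'.+1 => exist _ (proj1_sig (stepf n' (V n'))) (proj1 (proj2_sig (stepf n' (V n'))))
  end.
exists (fun n => proj1_sig (V n)); split.
  split => n.
    by case: (proj2_sig (V n)) => ? ? _ _; split.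
  exact: (proj2 (proj2_sig (stepf n (V n)))).
apply: functional_extensionality_dep => n; apply: funext => t.
by case: (proj2_sig (V n)) => _ _ _ h; exact: h.
Qed.

End ML.


End Helpers.
Import Helpers.

Theorem mainTheorem12 (X : tower) :
  (forall (A B C : zmodType) (f : {additive A -> B}) (g : {additive B -> C}),
      left_exact_seq f g ->
      [/\ G_welldef X f, G_welldef X g, G_left_exact X f g & H_left_exact X f g])
  /\
  (mittag_leffler X ->
   forall (A B C : zmodType) (f : {additive A -> B}) (g : {additive B -> C}),
      short_exact_seq f g ->
      [/\ G_left_exact X f g, G_surj X g, H_left_exact X f g & H_surj X g]).
Proof.
split; first exact: part1.
move=> ml A B C f g [le sj].
have [_ _ GL HL] := part1 X le.
have GS := G_surj_ML (X := X) ml sj.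
split => // w hw; have [v [hv ev]] := GS w hw.
exists v; split => //.
have -> : sfsub w (Gmap g v) = sfzero X C.
  apply: functional_extensionality_dep => n; apply: funext => t.
  by rewrite ev /sfsub GRing.subrr.
exact: rho0.
Qed.
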